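(* Let $\mathbb{M}$ be a weight sequence with sequence of quotients $\mathbf{m}$. Then $\beta(\mathbf{m})=\frac{1}{\alpha(\nu_{\mathbf{m}})}$ and $\alpha(\mathbf{m})=\frac{1}{\beta(\nu_{\mathbf{m}})}$ (with the conventions $1/0=\infty$, $1/\infty=0$).
   Context: A weight sequence is $\mathbb{M}=(M_p)_{p\in\mathbb{N}_0}$ of positive reals with $M_0=1$, $M_p^2\le M_{p-1}M_{p+1}$ ($p\ge1$) and $M_p^{1/p}\to\infty$; $m_p=M_{p+1}/M_p$. $\nu_{\mathbf{m}}(t):=\#\{j\in\mathbb{N}_0:m_j\le t\}$ for $t>0$. For a positive measurable $f$ on $[A,\infty)$: $\alpha(f):=\inf\{\alpha:\exists C_\alpha>0\ \forall\Lambda>1,\ \limsup_{x\to\infty}\sup_{\lambda\in[1,\Lambda]}\frac{f(\lambda x)}{\lambda^{\alpha}f(x)}\le C_\alpha\}$ and $\beta(f):=\sup\{\beta:\exists D_\beta>0\ \forall\Lambda>1,\ \liminf_{x\to\infty}\inf_{\lambda\in[1,\Lambda]}\frac{f(\lambda x)}{\lambda^{\beta}f(x)}\ge D_\beta\}$ ($\inf\emptyset=\infty$, $\sup\emptyset=-\infty$); for $\nu_{\mathbf{m}}$ these are computed on $[m_0,\infty)$. For the sequence $\mathbf{m}$, $\alpha(\mathbf{m}),\beta(\mathbf{m})$ are these indices of the step function $f(x)=m_{\lfloor x\rfloor-1}$, $x\ge1$. *)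

(* Defs.v *)
From HB Require Import structures.
From mathcomp Require Import all_boot all_order all_algebra.
From mathcomp Require Import all_classical all_reals all_analysis.
Set Implicit Arguments. Unset Strict Implicit. Unset Printing Implicit Defensive.
Import Order.TTheory GRing.Theory Num.Theory.
Import numFieldNormedType.Exports.
Local Open Scope classical_set_scope.
Local Open Scope ring_scope.

Section Defs.
Variable R : realType.

Definition weight_sequence (M : nat -> R) : Prop :=
  [/\ M 0%N = 1,
      (forall p, 0 < M p),
      (forall p, (1 <= p)%N -> M p ^+ 2 <= M p.-1 * M p.+1)
    & (fun p : nat => M p `^ (p%:R)^-1) @ \oo --> +oo].

Definition quotients (M : nat -> R) (p : nat) : R := M p.+1 / M p.

(* nu_m(t) = #{ j in N_0 : m_j <= t } (finite for weight sequences) *)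
Definition nu (m : nat -> R) (t : R) : R :=
  fine (counting [set j : nat | m j <= t]).

(* step function x |-> m_{floor(x) - 1} (relevant for x >= 1) *)
Definition seqfun (m : nat -> R) (x : R) : R := m (Num.truncn x).-1.

Definition limsup_infty (g : R -> \bar R) : \bar R :=
  ereal_inf [set ereal_sup (g @` [set x | X <= x]) | X in [set: R]].
Definition liminf_infty (g : R -> \bar R) : \bar R :=
  ereal_sup [set ereal_inf (g @` [set x | X <= x]) | X in [set: R]].

Definition ratio_sup (f : R -> R) (a Lam x : R) : \bar R :=
  ereal_sup [set ((f (l * x)) / (l `^ a * f x))%:E | l in `[1, Lam]].
Definition ratio_inf (f : R -> R) (a Lam x : R) : \bar R :=
  ereal_inf [set ((f (l * x)) / (l `^ a * f x))%:E | l in `[1, Lam]].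

Definition alpha_idx (f : R -> R) : \bar R :=
  ereal_inf [set a%:E | a in [set a : R | exists2 C : R, 0 < C &
     forall Lam : R, 1 < Lam -> (limsup_infty (ratio_sup f a Lam) <= C%:E)%E]].
Definition beta_idx (f : R -> R) : \bar R :=
  ereal_sup [set b%:E | b in [set b : R | exists2 D : R, 0 < D &
     forall Lam : R, 1 < Lam -> (D%:E <= liminf_infty (ratio_inf f b Lam))%E]].

End Defs.

(* Main.v *)
Require Import Defs.
From HB Require Import structures.
From mathcomp Require Import all_boot all_order all_algebra.
From mathcomp Require Import all_classical all_reals all_analysis.
From mathcomp Require Import lra ring zify.
Set Implicit Arguments. Unset Strict Implicit. Unset Printing Implicit Defensive.
Import Order.TTheory GRing.Theory Num.Theory.
Import numFieldNormedType.Exports.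
Local Open Scope classical_set_scope.
Local Open Scope ring_scope.

Definition good (R : realType) (m : nat -> R) :=
  [/\ (forall i, 0 < m i), (forall i j, (i <= j)%N -> m i <= m j)
    & (forall T, exists j, T < m j)].

Lemma ws_good (R : realType) (M : nat -> R) :
  weight_sequence M -> good (quotients M).
Proof.
case=> M0 Mpos Mlc Mcvg.
have mpos i : 0 < quotients M i by rewrite /quotients divr_gt0.
have mS p : quotients M p <= quotients M p.+1.
  rewrite /quotients ler_pdivrMr // mulrAC ler_pdivlMr // -expr2.
  by have := Mlc p.+1 isT; rewrite /= mulrC.
have mono : forall i j, (i <= j)%N -> quotients M i <= quotients M j.
  by move=> i j; have := nondecreasing_seqP (quotients M); case=> + _ => /(_ mS); apply.
split => // T; apply/not_existsP => /= hT.
have {}hT j : quotients M j <= T by rewrite leNgt; apply/negP/hT.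
have T0 : 0 < T by apply: lt_le_trans (hT 0%N).
have HM p : M p <= T ^+ p.
  elim: p => [|p IH]; first by rewrite M0 expr0.
  have -> : M p.+1 = quotients M p * M p by rewrite /quotients divfK // gt_eqF.
  by rewrite exprS ler_pM // ?ltW.
move/cvgryPge: Mcvg => /(_ (T + 1)) [N _ HN].
have := HN N.+1 (leqnSn N); rewrite /=.
apply/negP; rewrite -ltNge.
apply: (@le_lt_trans _ _ ((T ^+ N.+1) `^ (N.+1%:R)^-1)).
  apply: ge0_ler_powR; rewrite ?nnegrE ?invr_ge0 ?exprn_ge0 ?HM //; [exact: ltW | exact: ltW].
rewrite -powR_mulrn ?ltW // -powRrM mulfV ?pnatr_eq0 // powRr1 ?ltW //.
by rewrite ltrDl.
Qed.

Lemma nu_char (R : realType) (m : nat -> R) t : good m ->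
  exists n : nat, nu m t = n%:R /\ forall j, (j < n)%N = (m j <= t).
Proof.
case=> mpos mmono mub.
have ex : exists j, t < m j by apply: mub.
exists (ex_minn ex); case: ex_minnP => n tn nmin.
have Hj j : (j < n)%N = (m j <= t).
  apply/idP/idP => [jn|mjt].
    by rewrite leNgt; apply/negP => /nmin; rewrite leqNgt jn.
  rewrite ltnNge; apply/negP => nj.
  by have := lt_le_trans tn (mmono _ _ nj); rewrite ltNge mjt.
split => //; rewrite /nu.
have -> : [set j : nat | m j <= t] = `I_n.
  by apply/seteqP; split => j /=; rewrite Hj.
rewrite /counting asboolT; last exact: finite_II.
rewrite (@card_fset_set _ _ n) //; exact: card_eqxx.
Qed.

Definition UA (R : realType) (f : R -> R) (a : R) :=
  exists2 C : R, 0 < C & forall Lam, 1 < Lam -> exists X, forall x, X <= x ->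
    forall l, 1 <= l <= Lam -> f (l * x) <= C * (l `^ a * f x).
Definition UB (R : realType) (f : R -> R) (b : R) :=
  exists2 D : R, 0 < D & forall Lam, 1 < Lam -> exists X, forall x, X <= x ->
    forall l, 1 <= l <= Lam -> D * (l `^ b * f x) <= f (l * x).
Definition Aset (R : realType) (f : R -> R) := [set a : R | exists2 C : R, 0 < C &
     forall Lam : R, 1 < Lam -> (limsup_infty (ratio_sup f a Lam) <= C%:E)%E].
Definition Bset (R : realType) (f : R -> R) := [set b : R | exists2 D : R, 0 < D &
     forall Lam : R, 1 < Lam -> (D%:E <= liminf_infty (ratio_inf f b Lam))%E].

Lemma A_UA (R : realType) (f : R -> R) a :
  (exists X0, forall x, X0 <= x -> 0 < f x) -> Aset f a -> UA f a.
Proof.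
move=> [X0 HX0] [C C0 HC]; exists (2 * C); first by rewrite mulr_gt0.
move=> Lam Lam1; have := HC Lam Lam1.
have : (C%:E < (2 * C)%:E)%E by rewrite lte_fin ltr_pMl // ltr1n.
move=> h1 h2; have := le_lt_trans h2 h1.
move=> /ereal_inf_lt [y [X _ <-]] Hy.
exists (Num.max X X0) => x; rewrite ge_max => /andP[xX xX0] l /andP[l1 lL].
have fx : 0 < f x by apply: HX0.
have lp : 0 < l `^ a * f x by rewrite mulr_gt0 // powR_gt0 // (lt_le_trans ltr01).
rewrite -ler_pdivrMr // ltW // -lte_fin.
apply: le_lt_trans Hy.
apply: (@le_trans _ _ (ratio_sup f a Lam x)).
  by apply: ereal_sup_ubound; exists l => //=; rewrite in_itv /= l1 lL.
by apply: ereal_sup_ubound; exists x.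
Qed.

Lemma UA_A (R : realType) (f : R -> R) a :
  (exists X0, forall x, X0 <= x -> 0 < f x) -> UA f a -> Aset f a.
Proof.
move=> [X0 HX0] [C C0 HC]; exists C => // Lam Lam1.
have [X HX] := HC Lam Lam1.
apply: (@le_trans _ _ (ereal_sup ((ratio_sup f a Lam) @` [set x | Num.max X X0 <= x]))).
  by apply: ereal_inf_lbound; exists (Num.max X X0).
apply/ereal_supP => _ [x /= + <-]; rewrite ge_max => /andP[xX xX0].
apply/ereal_supP => _ [l /= + <-]; rewrite in_itv /= => /andP[l1 lL].
have fx : 0 < f x by apply: HX0.
have lp : 0 < l `^ a * f x by rewrite mulr_gt0 // powR_gt0 // (lt_le_trans ltr01).
by rewrite lee_fin ler_pdivrMr // HX // l1.
Qed.

Lemma B_UB (R : realType) (f : R -> R) b :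
  (exists X0, forall x, X0 <= x -> 0 < f x) -> Bset f b -> UB f b.
Proof.
move=> [X0 HX0] [D D0 HD]; exists (D / 2); first by rewrite divr_gt0.
move=> Lam Lam1; have := HD Lam Lam1.
have : ((D / 2)%:E < D%:E)%E by rewrite lte_fin ltr_pdivrMr // ltr_pMr // ltr1n.
move=> h1 h2; have := lt_le_trans h1 h2.
move=> /ereal_sup_gt [y [X _ <-]] Hy.
exists (Num.max X X0) => x; rewrite ge_max => /andP[xX xX0] l /andP[l1 lL].
have fx : 0 < f x by apply: HX0.
have lp : 0 < l `^ b * f x by rewrite mulr_gt0 // powR_gt0 // (lt_le_trans ltr01).
rewrite -ler_pdivlMr // ltW // -lte_fin.
apply: lt_le_trans Hy _.
apply: (@le_trans _ _ (ratio_inf f b Lam x)).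
  by apply: ereal_inf_lbound; exists x.
by apply: ereal_inf_lbound; exists l => //=; rewrite in_itv /= l1 lL.
Qed.

Lemma UB_B (R : realType) (f : R -> R) b :
  (exists X0, forall x, X0 <= x -> 0 < f x) -> UB f b -> Bset f b.
Proof.
move=> [X0 HX0] [D D0 HD]; exists D => // Lam Lam1.
have [X HX] := HD Lam Lam1.
apply: (@le_trans _ _ (ereal_inf ((ratio_inf f b Lam) @` [set x | Num.max X X0 <= x]))); last first.
  by apply: ereal_sup_ubound; exists (Num.max X X0).
apply/ereal_infP => _ [x /= + <-]; rewrite ge_max => /andP[xX xX0].
apply/ereal_infP => _ [l /= + <-]; rewrite in_itv /= => /andP[l1 lL].
have fx : 0 < f x by apply: HX0.
have lp : 0 < l `^ b * f x by rewrite mulr_gt0 // powR_gt0 // (lt_le_trans ltr01).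
by rewrite lee_fin ler_pdivlMr // HX // l1.
Qed.
Lemma L1 (R : realType) (r b : R) : 0 < r -> 0 <= b ->
  (forall s, r < s -> s^-1 <= b) -> r^-1 <= b.
Proof.
move=> r0 b0 H; rewrite leNgt; apply/negP => br.
set c := (b + r^-1) / 2.
have c0 : 0 < c by rewrite divr_gt0 // ltr_wpDl // invr_gt0.
have cb : b < c by rewrite /c ltr_pdivlMr // mulr_natr mulr2n ltrD2l.
have cr : c < r^-1 by rewrite /c ltr_pdivrMr // mulr_natr mulr2n ltrD2r.
have rc : r < c^-1 by rewrite -(invrK r) ltf_pV2 // ?posrE ?invr_gt0.
have := H c^-1 rc; rewrite invrK => cb'.
by have := lt_le_trans cb cb'; rewrite ltxx.
Qed.

Lemma L2 (R : realType) (r b : R) : 0 < b ->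
  (forall c, 0 < c -> c < b -> r <= c^-1) -> r <= b^-1.
Proof.
move=> b0 H; rewrite leNgt; apply/negP => br.
have bi0 : 0 < b^-1 by rewrite invr_gt0.
set c := (b^-1 + r) / 2.
have c0 : 0 < c by rewrite divr_gt0 // ltr_wpDr // ltW // (lt_trans bi0).
have cb : b^-1 < c by rewrite /c ltr_pdivlMr // mulr_natr mulr2n ltrD2l.
have cr : c < r by rewrite /c ltr_pdivrMr // mulr_natr mulr2n ltrD2r.
have cb' : c^-1 < b by rewrite -(invrK b) ltf_pV2 // ?posrE ?invr_gt0.
have := H c^-1; rewrite invrK invr_gt0 => /(_ c0 cb') rc.
by have := lt_le_trans cr rc; rewrite ltxx.
Qed.

Lemma dual (R : realType) (al be : \bar R) :
  (0 <= al)%E -> (0 <= be)%E ->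
  (forall s : R, 0 < s -> (al < s%:E)%E -> ((s^-1)%:E <= be)%E) ->
  (forall b : R, 0 < b -> (b%:E < be)%E -> (al <= (b^-1)%:E)%E) ->
  be = (al^-1)%E.
Proof.
move: al be => [r| |] [b| |] //; rewrite ?lee_fin => r0 b0 H1 H2.
- case: (eqVneq r 0) => [r0'|rn0].
    exfalso; subst r; have hb : 0 < b + 1 by rewrite ltr_wpDl.
    have := H1 (b + 1)^-1; rewrite invrK lee_fin lte_fin invr_gt0 => /(_ hb hb).
    by rewrite gerDl ler10.
  have rp : 0 < r by rewrite lt_def rn0.
  rewrite inver (negbTE rn0); congr (_%:E); apply/eqP; rewrite eq_le; apply/andP; split.
    case: (eqVneq b 0) => [->|bn0]; first by rewrite invr_ge0 ltW.
    have bp : 0 < b by rewrite lt_def bn0.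
    rewrite -(invrK b) lef_pV2 ?posrE ?invr_gt0 //.
    apply: L2 => // c c0 cb; have := H2 c c0; rewrite !lte_fin lee_fin; exact.
  have := L1 rp b0; apply => s rs; have s0 : 0 < s by apply: lt_trans rs.
  by have := H1 s s0; rewrite !lte_fin lee_fin; apply.
- case: (eqVneq r 0) => [->|rn0]; first by rewrite inve0.
  have rp : 0 < r by rewrite lt_def rn0.
  exfalso; have h2 : 0 < 2 / r by rewrite divr_gt0.
  have := H2 (2 / r) h2 (ltry _); rewrite lee_fin invf_div ler_pdivlMr // ?ltr0n //.
  by rewrite ger_pMr //; lra.
- case: (eqVneq b 0) => [->|bn0]; first by rewrite invey.
  have bp : 0 < b by rewrite lt_def bn0.
  exfalso; have h : 0 < b / 2 by rewrite divr_gt0.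
  have := H2 (b / 2) h; rewrite lte_fin; have -> : b / 2 < b by lra.
  by move=> /(_ isT).
- exfalso; have := H2 1 ltr01 (ltry _); by [].
Qed.

Definition regf (R : realType) (f : R -> R) :=
  [/\ (forall x, 0 <= f x), (forall x y, 0 <= x -> x <= y -> f x <= f y)
    & exists X0, forall x, X0 <= x -> 0 < f x].

Lemma UA_up (R : realType) (f : R -> R) a a' : regf f -> a <= a' -> UA f a -> UA f a'.
Proof.
case=> f0 _ _ aa [C C0 HC]; exists C => // Lam Lam1.
have [X HX] := HC Lam Lam1; exists X => x Xx l /andP[l1 lL].
have := HX x Xx l; rewrite l1 lL => /(_ isT) H; apply: (le_trans H).
by apply: ler_wpM2l; [exact: ltW | apply: ler_wpM2r => //; apply: ler_powR].
Qed.

Lemma UB_down (R : realType) (f : R -> R) b b' : regf f -> b' <= b -> UB f b -> UB f b'.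
Proof.
case=> f0 _ _ bb [D D0 HD]; exists D => // Lam Lam1.
have [X HX] := HD Lam Lam1; exists X => x Xx l /andP[l1 lL].
have := HX x Xx l; rewrite l1 lL => /(_ isT) H; apply: le_trans H.
by apply: ler_wpM2l; [exact: ltW | apply: ler_wpM2r => //; apply: ler_powR].
Qed.

Lemma UB0 (R : realType) (f : R -> R) : regf f -> UB f 0.
Proof.
case=> f0 fm _; exists 1 => // Lam Lam1; exists 0 => x x0 l /andP[l1 lL].
rewrite powRr0 !mul1r fm //; rewrite -[X in X <= _]mul1r ler_wpM2r //.
Qed.

Lemma onepow (R : realType) (x e : R) : 1 < x -> 0 < e -> 1 < x `^ e.
Proof.
move=> x1 e0; have h : (1:R) = 1 `^ e by rewrite powR1.
rewrite [X in X < _]h.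
by apply: gt0_ltr_powR; rewrite ?nnegrE ?ler01 ?ltW // (lt_trans ltr01).
Qed.

Lemma UA_ge0 (R : realType) (f : R -> R) a : regf f -> UA f a -> 0 <= a.
Proof.
case=> f0 fm [X0 HX0] [C C0 HC]; rewrite leNgt; apply/negP => a0.
set Lam := (2 * C + 2) `^ (- a^-1).
have ai : 0 < - a^-1 by rewrite oppr_gt0 invr_lt0.
have Lam1 : 1 < Lam by apply: onepow => //; lra.
have [X HX] := HC Lam Lam1.
set x := Num.max (Num.max X X0) 0.
have xX : X <= x by rewrite /x !le_max lexx.
have xX0 : X0 <= x by rewrite /x !le_max lexx ?orbT.
have x0 : 0 <= x by rewrite /x le_max lexx orbT.
have := HX x xX Lam; rewrite (ltW Lam1) lexx => /(_ isT) H.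
have fx : 0 < f x by apply: HX0.
have : f x <= f (Lam * x) by apply: fm => //; rewrite ler_peMl // ltW.
move=> /le_trans /(_ H).
have -> : Lam `^ a = (2 * C + 2)^-1.
  rewrite /Lam -powRrM mulNr mulVf ?lt_eqF // powRN powRr1 //; lra.
rewrite mulrA -[X in X <= _ -> _]mul1r ler_pM2r // => h.
have : C * (2 * C + 2)^-1 < 1 by rewrite ltr_pdivrMr; lra.
by rewrite ltNge h.
Qed.

Lemma alpha_ge0 (R : realType) (f : R -> R) : regf f -> (0 <= alpha_idx f)%E.
Proof.
move=> rf; apply/ereal_infP => _ [a Aa <-]; rewrite lee_fin.
apply: (UA_ge0 rf); apply: A_UA => //; by case: rf.
Qed.

Lemma alpha_lt (R : realType) (f : R -> R) s : regf f -> (alpha_idx f < s%:E)%E -> UA f s.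
Proof.
move=> rf /ereal_inf_lt [_ [a Aa <-]]; rewrite lte_fin => as_.
apply: (UA_up rf (ltW as_)); apply: A_UA => //; by case: rf.
Qed.

Lemma alpha_le (R : realType) (f : R -> R) s : regf f -> UA f s -> (alpha_idx f <= s%:E)%E.
Proof.
move=> rf H; apply: ereal_inf_lbound; exists s => //.
apply: UA_A => //; by case: rf.
Qed.

Lemma beta_ge0 (R : realType) (f : R -> R) : regf f -> (0 <= beta_idx f)%E.
Proof.
move=> rf; apply: ereal_sup_ubound; exists 0 => //.
apply: UB_B; [by case: rf | exact: UB0].
Qed.

Lemma beta_gt (R : realType) (f : R -> R) s : regf f -> (s%:E < beta_idx f)%E -> UB f s.
Proof.
move=> rf /ereal_sup_gt [_ [a Aa <-]]; rewrite lte_fin => as_.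
apply: (UB_down rf (ltW as_)); apply: B_UB => //; by case: rf.
Qed.

Lemma beta_le (R : realType) (f : R -> R) s : regf f -> UB f s -> (s%:E <= beta_idx f)%E.
Proof.
move=> rf H; apply: ereal_sup_ubound; exists s => //.
apply: UB_B => //; by case: rf.
Qed.

Lemma abstract_main (R : realType) (g N : R -> R) : regf g -> regf N ->
  (forall b, 0 < b -> UB g b -> UA N b^-1) ->
  (forall a, 0 < a -> UA N a -> UB g a^-1) ->
  (forall a, 0 < a -> UA g a -> UB N a^-1) ->
  (forall b, 0 < b -> UB N b -> UA g b^-1) ->
  beta_idx g = ((alpha_idx N)^-1)%E /\ alpha_idx g = ((beta_idx N)^-1)%E.
Proof.
move=> rg rN T1 T2 T3 T4; split.
  apply: dual; [exact: alpha_ge0 | exact: beta_ge0 | |].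
    move=> s s0 /(alpha_lt rN) H; apply: beta_le => //; exact: T2.
  move=> b b0 /(beta_gt rg) H; apply: alpha_le => //; exact: T1.
have -> : beta_idx N = ((alpha_idx g)^-1)%E.
  apply: dual; [exact: alpha_ge0 | exact: beta_ge0 | |].
    move=> s s0 /(alpha_lt rg) H; apply: beta_le => //; exact: T3.
  move=> b b0 /(beta_gt rN) H; apply: alpha_le => //; exact: T4.
by rewrite inveK.
Qed.


Section G.
Variable R : realType.
Implicit Types m : nat -> R.

Lemma g_pos m x : good m -> 0 < seqfun m x.
Proof. by case=> mp _ _; rewrite /seqfun. Qed.

Lemma g_mono m x y : good m -> x <= y -> seqfun m x <= seqfun m y.
Proof.
case=> _ mm _ xy; rewrite /seqfun; apply: mm.
by rewrite -!subn1 leq_sub2r // le_truncn.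
Qed.

Lemma g_nat m k : seqfun m k%:R = m k.-1.
Proof. by rewrite /seqfun natrK. Qed.

Lemma nu_ge0 m t : good m -> 0 <= nu m t.
Proof. by move=> gm; have [n [-> _]] := nu_char t gm. Qed.

Lemma nu_mono m s t : good m -> s <= t -> nu m s <= nu m t.
Proof.
move=> gm st; have [n [-> Hn]] := nu_char s gm; have [k [-> Hk]] := nu_char t gm.
rewrite ler_nat leqNgt; apply/negP => kn.
by move: kn; rewrite Hn => /le_trans /(_ st); rewrite -Hk ltnn.
Qed.

Lemma nu_big m j t : good m -> m j <= t -> (j.+1)%:R <= nu m t.
Proof.
by move=> gm mjt; have [n [-> Hn]] := nu_char t gm; rewrite ler_nat Hn.
Qed.

Lemma reg_g m : good m -> regf (seqfun m).
Proof.
move=> gm; split.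
- by move=> x; apply/ltW/g_pos.
- by move=> x y _; apply: g_mono.
- by exists 0 => x _; apply: g_pos.
Qed.

Lemma reg_nu m : good m -> regf (nu m).
Proof.
move=> gm; split.
- by move=> x; apply: nu_ge0.
- by move=> x y _; apply: nu_mono.
- exists (m 0%N) => x mx; apply: lt_le_trans (nu_big gm mx); exact: ltr0Sn.
Qed.

Lemma powR_ge1 (x e : R) : 1 <= x -> 0 <= e -> 1 <= x `^ e.
Proof. by move=> x1 e0; rewrite -(powRr0 x); apply: ler_powR. Qed.

Lemma powR_inv_pow (x e : R) : 0 <= x -> 0 < e -> (x `^ e^-1) `^ e = x.
Proof. by move=> x0 e0; rewrite -powRrM mulVf ?gt_eqF // powRr1. Qed.

End G.


Section T.
Variable R : realType.
Implicit Types m : nat -> R.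

Lemma D_le1 (f : R -> R) b D : (forall x, 0 < f x) ->
  (forall Lam, 1 < Lam -> exists X, forall x, X <= x ->
    forall l, 1 <= l <= Lam -> D * (l `^ b * f x) <= f (l * x)) -> D <= 1.
Proof.
move=> fp HD; have [X HX] := HD 2 (@ltr1n R 2).
have := HX X (lexx _) 1; rewrite lexx /= => /(_ (ltW (@ltr1n R 2))).

by rewrite powR1 /= !mul1r ger_pMl // fp.
Qed.

Lemma truncX (X : R) : exists j : nat, X < j%:R.
Proof.
exists (Num.truncn (Num.max X 0)).+1.
apply: le_lt_trans (truncnS_gt _); by rewrite le_max lexx.
Qed.

Lemma T1 m b : good m -> 0 < b -> UB (seqfun m) b -> UA (nu m) b^-1.
Proof.
move=> gm b0 [D D0 HD].
have D1 : D <= 1 by apply: (D_le1 (b := b)) HD => x; apply: g_pos.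
have Di0 : 0 <= D^-1 by rewrite invr_ge0 ltW.
have bi0 : 0 < b^-1 by rewrite invr_gt0.
exists (2 * D^-1 `^ b^-1); first by rewrite mulr_gt0 // powR_gt0 // invr_gt0.
move=> Lam' Lam'1.
set Lam := (Lam' / D) `^ b^-1 + 1.
have Lam1 : 1 < Lam by rewrite /Lam ltrDr powR_gt0 // divr_gt0 // (lt_trans ltr01).
have [X HX] := HD Lam Lam1.
have [j0 Xj0] := truncX X.
exists (m j0) => t tT l /andP[l1 lL].
have l0 : 0 < l by apply: lt_le_trans l1.
have [n [Nt Hn]] := nu_char t gm.
have [k [Nk Hk]] := nu_char (l * t) gm.
rewrite Nt Nk.
have nj : (j0 < n)%N by rewrite Hn.
set mu := (l / D) `^ b^-1.
have lD1 : 1 <= l / D by rewrite ler_pdivlMr // mul1r (le_trans D1).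
have mu1 : 1 <= mu by apply: powR_ge1 => //; exact: ltW.
have muL : mu <= Lam.
  rewrite /Lam; apply: ler_wpDr => //; apply: ge0_ler_powR.
  - exact: ltW.
  - by rewrite nnegrE (le_trans ler01 lD1).
  - by rewrite nnegrE divr_ge0 // ltW // (lt_trans ltr01).
  - by rewrite ler_pM2r ?invr_gt0.
have mub : D * mu `^ b = l.
  rewrite /mu powR_inv_pow //; last by rewrite (le_trans ler01 lD1).
  by rewrite mulrC divfK // gt_eqF.
have key : k%:R <= mu * n.+1%:R.
  rewrite leNgt; apply/negP => kbig.
  have Xn : X <= n.+1%:R.
    by apply: ltW; apply: (lt_le_trans Xj0); rewrite ler_nat; exact: leq_trans (ltnW nj) (leqnSn n).
  have H1 := HX _ Xn mu; rewrite mu1 muL in H1; have {}H1 := H1 isT.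
  have gn : t < seqfun m n.+1%:R by rewrite g_nat /= ltNge -Hn ltnn.
  have k0 : (0 < k)%N.
    by rewrite -(ltr_nat R); apply: le_lt_trans kbig; rewrite mulr_ge0 // ltW // (lt_le_trans ltr01).
  have gk : seqfun m k%:R <= l * t by rewrite g_nat -Hk prednK.
  have gmk : seqfun m (mu * n.+1%:R) <= seqfun m k%:R by apply: g_mono => //; exact: ltW.
  have h := le_trans H1 (le_trans gmk gk); rewrite mulrA mub in h.
  have : l * t < l * seqfun m n.+1%:R by rewrite ltr_pM2l.
  by rewrite ltNge h.
have n1 : (1 <= n)%N by apply: leq_ltn_trans nj.
have n2 : n.+1%:R <= 2 * n%:R :> R.
  by rewrite -natrM ler_nat mul2n -addnn -addn1 leq_add2l.
have muE : mu = l `^ b^-1 * D^-1 `^ b^-1 by rewrite /mu powRM // ltW.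
apply: (le_trans key); rewrite muE.
have PQ : 0 <= l `^ b^-1 * D^-1 `^ b^-1 by rewrite mulr_ge0 // powR_ge0.
apply: le_trans (ler_wpM2l PQ n2) _.
by rewrite le_eqVlt; apply/orP; left; apply/eqP; ring.
Qed.

Lemma T2 m a : good m -> 0 < a -> UA (nu m) a -> UB (seqfun m) a^-1.
Proof.
move=> gm a0 [C C0 HC].
have ai0 : 0 < a^-1 by rewrite invr_gt0.
set P := 2 `^ a; have P0 : 0 < P by rewrite powR_gt0.
set K := 4 * C ^+ 2 * P; have K0 : 0 < K by rewrite !mulr_gt0 // exprn_gt0.
set D := K^-1 `^ a^-1; have D0 : 0 < D by rewrite powR_gt0 // invr_gt0.
have Da : D `^ a = K^-1 by rewrite powR_inv_pow // invr_ge0 ltW.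
exists D => // Lam' Lam'1.
set Lam := 2 + D * Lam' `^ a^-1.
have DL0 : 0 <= D * Lam' `^ a^-1 by rewrite mulr_ge0 ?powR_ge0 // ltW.
have Lam1 : 1 < Lam by rewrite /Lam; lra.
have [T HT] := HC Lam Lam1.
have [j1 Hj1] : exists j1, 2 * T < m j1 by case: gm => _ _ ub; apply: ub.
exists (j1 + 2)%:R => x Xx l /andP[l1 lL].
have x2 : 2 <= x by apply: le_trans Xx; rewrite ler_nat leq_addl.
have x0 : 0 <= x by lra.
have l0 : 0 < l by lra.
have lx0 : 0 <= l * x by rewrite mulr_ge0 // ltW.
have xlx : x <= l * x by rewrite ler_peMl.
have [jx xj] := andP (truncn_itv x0).
set j := Num.truncn x in jx xj.
have jge : (j1 + 2 <= j)%N by rewrite truncn_ge_nat.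
set t := seqfun m x.
have tE : t = m j.-1 by [].
have t0 : 0 < t by apply: g_pos.
have tT : 2 * T < t.
  apply: (lt_le_trans Hj1); rewrite tE; case: gm => _ mm _; apply: mm.
  have : (j1 <= j.-1)%N by clear -jge; lia.
  exact.
set lam := D * l `^ a^-1.
case: (lerP lam 1) => [lam1 | lam1].
  rewrite mulrA; apply: le_trans (g_mono gm xlx).
  by rewrite -[X in _ <= X]mul1r ler_wpM2r // ltW.
rewrite mulrA leNgt; apply/negP => glx.
have lamL : lam <= Lam.
  rewrite /Lam /lam; apply: ler_wpDl => //; apply: ler_wpM2l; first exact: ltW.
  apply: ge0_ler_powR; rewrite ?nnegrE; [exact: ltW | lra | lra | lra].
have Ha := HT (t / 2) ltac:(lra) 2 ltac:(apply/andP; split; rewrite /Lam; lra).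
rewrite mulrC divfK ?pnatr_eq0 // in Ha.
have [n2 [Nn2 Hn2]] := nu_char (t / 2) gm.
have n2j : (n2 <= j.-1)%N.
  rewrite leqNgt; apply/negP; rewrite Hn2 -tE => h; lra.
have Hd := HT t ltac:(lra) lam ltac:(apply/andP; split; lra).
have [ix xi] := andP (truncn_itv lx0).
set i := Num.truncn (l * x) in ix xi.
have i1 : (1 <= i)%N by rewrite truncn_ge_nat //; lra.
have gi : seqfun m (l * x) = m i.-1 by [].
have Hc := nu_big gm (ltW (eq_ind _ (fun u => u < lam * t) glx _ gi)).
rewrite prednK // in Hc.
have lama : lam `^ a = K^-1 * l.
  rewrite /lam powRM ?Da ?powR_inv_pow // ?ltW //.
  exact: powR_gt0.
rewrite lama Nn2 in Hd Ha.
have n2x : n2%:R <= x.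
  apply: le_trans jx; rewrite ler_nat; apply: leq_trans n2j _; exact: leq_pred.
have Nt0 := nu_ge0 t gm.
have h1 : i%:R <= C * (K^-1 * l * (C * (P * x))).
  apply: (le_trans Hc); apply: (le_trans Hd); apply: ler_wpM2l; first exact: ltW.
  apply: ler_wpM2l; first by rewrite mulr_ge0 // ltW // invr_gt0.
  apply: (le_trans Ha); apply: ler_wpM2l; first exact: ltW.
  by apply: ler_wpM2l; first exact: ltW.
have h2 : C * (K^-1 * l * (C * (P * x))) = l * x / 4.
  rewrite /K; field; rewrite ?gt_eqF //.
rewrite h2 in h1; lra.
Qed.

Lemma T3 m a : good m -> 0 < a -> UA (seqfun m) a -> UB (nu m) a^-1.
Proof.
move=> gm a0 [C C0 HC].
have ai0 : 0 < a^-1 by rewrite invr_gt0.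
have Ci0 : 0 < C^-1 by rewrite invr_gt0.
set D := C^-1 `^ a^-1 / 2.
have D0 : 0 < D by rewrite divr_gt0 // powR_gt0.
exists D => // Lam' Lam'1.
set Lam := 1 + (Lam' / C) `^ a^-1.
have LC0 : 0 < (Lam' / C) `^ a^-1 by rewrite powR_gt0 // divr_gt0 //; lra.
have Lam1 : 1 < Lam by rewrite /Lam; lra.
have [X HX] := HC Lam Lam1.
have [j0 Xj0] := truncX X.
exists (m j0) => t tT l /andP[l1 lL].
have l0 : 0 < l by lra.
have t0 : 0 < t by apply: lt_le_trans tT; case: gm.
have [n [Nt Hn]] := nu_char t gm.
have [k [Nk Hk]] := nu_char (l * t) gm.
have nj : (j0 < n)%N by rewrite Hn.
have kn : n%:R <= k%:R :> R.
  by rewrite -Nt -Nk; apply: nu_mono => //; rewrite ler_peMl // ltW.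
rewrite Nt Nk.
set mu := (l / C) `^ a^-1.
have mu0 : 0 <= mu by apply: powR_ge0.
have muE : D * l `^ a^-1 = mu / 2.
  by rewrite /D /mu mulrC mulrA -powRM ?ltW // mulrC.
rewrite mulrA muE.
have n0 : 0 <= n%:R :> R by [].
case: (lerP mu 1) => [mu1 | mu1].
  have : mu / 2 * n%:R <= n%:R.
    by rewrite -[X in _ <= X]mul1r; apply: ler_wpM2r => //; lra.
  lra.
have key : mu * n%:R < k.+1%:R.
  rewrite ltNge; apply/negP => kbig.
  have Xn : X <= n%:R by apply: ltW; apply: (lt_le_trans Xj0); rewrite ler_nat ltnW.
  have muL : mu <= Lam.
    rewrite /Lam /mu; apply: ler_wpDl => //; apply: ge0_ler_powR; rewrite ?nnegrE.
    - exact: ltW.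
    - by rewrite divr_ge0 // ltW.
    - by rewrite divr_ge0 // ltW // (lt_trans ltr01).
    - by rewrite ler_pM2r.
  have H1 := HX _ Xn mu; rewrite (ltW mu1) muL in H1; have {}H1 := H1 isT.
  have Cmu : C * mu `^ a = l.
    rewrite /mu powR_inv_pow //; last by rewrite divr_ge0 // ltW.
    by rewrite mulrC divfK // gt_eqF.
  rewrite mulrA Cmu in H1.
  have gn : seqfun m n%:R <= t by rewrite g_nat -Hn prednK // (leq_ltn_trans _ nj).
  have gk : l * t < seqfun m k.+1%:R by rewrite g_nat /= ltNge -Hk ltnn.
  have gmk : seqfun m k.+1%:R <= seqfun m (mu * n%:R) by apply: g_mono.
  have := le_trans gmk H1; rewrite leNgt; move/negP; apply.
  apply: le_lt_trans gk; rewrite ler_pM2l //.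
have n1 : 1 <= n%:R :> R by rewrite ler1n (leq_ltn_trans _ nj).
rewrite -addn1 natrD in key; lra.
Qed.

Lemma T4 m b : good m -> 0 < b -> UB (nu m) b -> UA (seqfun m) b^-1.
Proof.
move=> gm b0 [D D0 HD].
have bi0 : 0 < b^-1 by rewrite invr_gt0.
set E := (4 / D) `^ b^-1.
have E0 : 0 < E by rewrite powR_gt0 // divr_gt0.
set C := 1 + E.
have C1 : 1 < C by rewrite /C; lra.
have DCb : 4 <= D * C `^ b.
  rewrite -ler_pdivrMl // mulrC.
  have -> : 4 / D = E `^ b by rewrite powR_inv_pow // divr_ge0 // ltW.
  apply: ge0_ler_powR; rewrite ?nnegrE; [exact: ltW | exact: ltW | lra | rewrite /C; lra].
exists C; first lra.
move=> Lam' Lam'1.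
set Lam := C * Lam' `^ b^-1.
have L1 : 1 <= Lam' `^ b^-1 by apply: powR_ge1; [lra | exact: ltW].
have Lam1 : 1 < Lam by rewrite /Lam; apply: (lt_le_trans C1); rewrite ler_peMr //; lra.
have [T HT] := HD Lam Lam1.
have [j1 Hj1] : exists j1, T < m j1 by case: gm => _ _ ub; apply: ub.
exists (j1 + 2)%:R => x Xx l /andP[l1 lL].
have x2 : 2 <= x by apply: le_trans Xx; rewrite ler_nat leq_addl.
have x0 : 0 <= x by lra.
have l0 : 0 < l by lra.
have lx0 : 0 <= l * x by rewrite mulr_ge0 // ltW.
have [jx xj] := andP (truncn_itv x0).
set j := Num.truncn x in jx xj.
have jge : (j1 + 2 <= j)%N by rewrite truncn_ge_nat.
set t := seqfun m x.
have tE : t = m j.-1 by [].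
have t0 : 0 < t by apply: g_pos.
have tT : T <= t.
  apply: ltW; apply: (lt_le_trans Hj1); rewrite tE; case: gm => _ mm _; apply: mm.
  clear -jge; lia.
set lam := C * l `^ b^-1.
have lam1 : 1 <= lam.
  rewrite /lam -[1]mulr1; apply: ler_pM => //; [lra | apply: powR_ge1 => //; exact: ltW].
have lamL : lam <= Lam.
  rewrite /Lam /lam; apply: ler_wpM2l; first lra.
  apply: ge0_ler_powR; rewrite ?nnegrE; [exact: ltW | lra | lra | lra].
rewrite mulrA -/lam leNgt; apply/negP => glx.
have Hd := HT t tT lam ltac:(by rewrite lam1 lamL).
have [ix xi] := andP (truncn_itv lx0).
set i := Num.truncn (l * x) in ix xi.
have gi : seqfun m (l * x) = m i.-1 by [].
rewrite gi in glx.
have [k [Nk Hk]] := nu_char (lam * t) gm.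
have ki : (k <= i.-1)%N.
  rewrite leqNgt; apply/negP; rewrite Hk => h; by rewrite ltNge h in glx.
have Nt : j%:R <= nu m t.
  have := nu_big gm (le_refl (m j.-1)); rewrite prednK; last by clear -jge; lia.
  by rewrite -tE.
have lamb : lam `^ b = C `^ b * l.
  rewrite /lam powRM ?powR_inv_pow //.
  - exact: ltW.
  - rewrite /C; lra.
  - exact: powR_ge0.
rewrite lamb Nk in Hd.
have kx : k%:R <= l * x.
  apply: le_trans ix; rewrite ler_nat; apply: leq_trans ki _; exact: leq_pred.
have lj0 : 0 <= l * j%:R by rewrite mulr_ge0 // ltW.
have s1 : 4 * (l * j%:R) <= D * C `^ b * (l * j%:R) := ler_wpM2r lj0 DCb.
have s2 : D * C `^ b * (l * j%:R) <= D * (C `^ b * l * nu m t).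
  rewrite -!mulrA; apply: ler_wpM2l; first exact: ltW.
  apply: ler_wpM2l; first exact: powR_ge0.
  by apply: ler_wpM2l; first exact: ltW.
have h1 := le_trans s1 (le_trans s2 (le_trans Hd kx)).
have h2 : 4 * j%:R <= x.
  by rewrite -(ler_pM2l l0) mulrCA.
lra.
Qed.

End T.

Theorem proposition4p1 (R : realType) (M : nat -> R) :
  weight_sequence M ->
  beta_idx (seqfun (quotients M)) = ((alpha_idx (nu (quotients M)))^-1)%E /\
  alpha_idx (seqfun (quotients M)) = ((beta_idx (nu (quotients M)))^-1)%E.
Proof.
move=> /ws_good gm.
apply: abstract_main; [exact: reg_g | exact: reg_nu | | | |].
- by move=> b b0; apply: T1.
- by move=> a a0; apply: T2.
- by move=> a a0; apply: T3.
- by move=> b b0; apply: T4.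
Qed.
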